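(* Consider a Clifford circuit $C=U_d\cdots U_1$ of depth $d$ consisting of nearest-neighbor two-qubit Clifford gates on qubits located at the sites of a $D$-dimensional lattice, and let $C_t=U_t\cdots U_1$ ($C_0=I$). For any error configuration $b$, i.e. any subset of noise locations $(i,t)$ (qubit $i$, after layer $t$), let $M_b$ be the set of Pauli operators $C_t^\dagger X_iC_t$ and $C_t^\dagger Z_iC_t$ over all $(i,t)\in b$, and let $\langle M_b\rangle$ be the group they generate. Partition the lattice into hypercubic sublattices of side length $2d$ and let $G=(V,E)$ be the graph whose vertices are the sublattices, with two sublattices joined by an edge if they are adjacent (including diagonally adjacent). Let $A\subseteq V$ be the largest connected component in $G$ such that each sublattice of $A$ contains at least one non-depolarized qubit. Then there exists a Pauli operator $s$ in the centralizer $\mathsf C(\langle M_b\rangle)$ whose support meets at least half of the sublattices in $A$ and which has no support outside of (the qubits of) $A$.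
   Context: A qubit $i$ is depolarized (for configuration $b$) if both $X_i$ and $Z_i$ belong to $\langle M_b\rangle$, and non-depolarized otherwise; here $X_i$ ($Z_i$) denotes $X$ ($Z$) on qubit $i$ and identity elsewhere. The centralizer $\mathsf C(H)$ of a group $H$ of Pauli operators is the set of (phaseless) Pauli operators commuting with every element of $H$. The support of a Pauli operator is the set of qubits on which it acts non-trivially. *)

(* Defs.v *)
From HB Require Import structures.
From mathcomp Require Import all_boot.
Set Implicit Arguments. Unset Strict Implicit. Unset Printing Implicit Defensive.

Section Lattice.
Variables (D L K : nat).

(* Qubits sit on the sites of the D-dimensional lattice {0..L-1}^D (open boundaries). *)
Definition site := {ffun 'I_D -> 'I_L}.

(* Phaseless Pauli operators: for every qubit, its (x,z) bits. *)
Definition pauli := {ffun site -> bool * bool}.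
Definition pid : pauli := [ffun => (false, false)].
Definition pmul (P R : pauli) : pauli :=
  [ffun q => ((P q).1 (+) (R q).1, (P q).2 (+) (R q).2)].
Definition sympl (P R : pauli) : bool :=
  \big[addb/false]_(q : site) (((P q).1 && (R q).2) (+) ((P q).2 && (R q).1)).
Definition pcommute (P R : pauli) : bool := ~~ sympl P R.
Definition supp (P : pauli) : {set site} := [set q | P q != (false, false)].
Definition Xop (i : site) : pauli := [ffun q => (q == i, false)].
Definition Zop (i : site) : pauli := [ffun q => (false, q == i)].

Inductive gen (S : pauli -> Prop) : pauli -> Prop :=
| gen_id : gen S pid
| gen_gen P : S P -> gen S P
| gen_mul P R : gen S P -> gen S R -> gen S (pmul P R).

Definition in_centralizer (H : pauli -> Prop) (s : pauli) : Prop :=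
  forall P, H P -> pcommute s P.

Definition nn (q r : site) : bool :=
  [exists j, (((nat_of_ord (q j)).+1 == nat_of_ord (r j))
              || ((nat_of_ord (r j)).+1 == nat_of_ord (q j)))
             && [forall k, (k != j) ==> (q k == r k)]].

(* two-qubit phaseless Paulis and the symplectic action of two-qubit Cliffords *)
Definition pauli2 := ((bool * bool) * (bool * bool))%type.
Definition add1 (a c : bool * bool) := (a.1 (+) c.1, a.2 (+) c.2).
Definition add2 (u v : pauli2) : pauli2 := (add1 u.1 v.1, add1 u.2 v.2).
Definition sym1 (a c : bool * bool) := (a.1 && c.2) (+) (a.2 && c.1).
Definition sym2 (u v : pauli2) := sym1 u.1 v.1 (+) sym1 u.2 v.2.
Definition clifford2 (f : pauli2 -> pauli2) : Prop :=
  [/\ forall u v, f (add2 u v) = add2 (f u) (f v),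
      forall u v, sym2 (f u) (f v) = sym2 u v & bijective f].

(* a gate: qubits gq1, gq2 and the map P |-> U^dagger P U on their Paulis *)
Record gate := Gate { gq1 : site; gq2 : site; gmap : pauli2 -> pauli2 }.
Definition valid_gate (g : gate) : Prop := nn (gq1 g) (gq2 g) /\ clifford2 (gmap g).
Definition gate_support (g : gate) : {set site} := [set gq1 g; gq2 g].
Definition gate_act (g : gate) (P : pauli) : pauli :=
  let w := gmap g (P (gq1 g), P (gq2 g)) in
  [ffun q => if q == gq1 g then w.1 else if q == gq2 g then w.2 else P q].

Fixpoint all_valid (l : seq gate) : Prop :=
  if l is g :: l' then valid_gate g /\ all_valid l' else True.
Definition valid_layer (l : seq gate) : Prop :=
  all_valid l /\ pairwise (fun g h => [disjoint gate_support g & gate_support h]) l.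
Definition layer_act (l : seq gate) (P : pauli) : pauli := foldr gate_act P l.

(* circuit: layers U 1, ..., U d;  heis U t P = C_t^dagger P C_t, C_t = U_t ... U_1 *)
Definition valid_circuit (d : nat) (U : nat -> seq gate) : Prop :=
  forall t, 1 <= t <= d -> valid_layer (U t).
Fixpoint heis (U : nat -> seq gate) (t : nat) (P : pauli) : pauli :=
  if t is t'.+1 then heis U t' (layer_act (U t'.+1) P) else P.

Definition Mb (d : nat) (U : nat -> seq gate) (b : {set site * 'I_d.+1}) (P : pauli) : Prop :=
  exists i (t : 'I_d.+1), (i, t) \in b /\
    (P = heis U t (Xop i) \/ P = heis U t (Zop i)).

Definition depolarized d U (b : {set site * 'I_d.+1}) (i : site) : Prop :=
  gen (Mb U b) (Xop i) /\ gen (Mb U b) (Zop i).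

(* sublattices (blocks) of side s, indexed by {0..K-1}^D *)
Definition block := {ffun 'I_D -> 'I_K}.
Definition inblock (s : nat) (v : block) (q : site) : bool :=
  [forall j, (q j) %/ s == nat_of_ord (v j)].
Definition badj (v w : block) : bool :=
  (v != w) && [forall j, (nat_of_ord (v j) <= (w j).+1) && (nat_of_ord (w j) <= (v j).+1)].

Definition good_block d U (b : {set site * 'I_d.+1}) (s : nat) (v : block) : Prop :=
  exists q, inblock s v q /\ ~ depolarized U b q.

Definition is_component (good : block -> Prop) (A : {set block}) : Prop :=
  [/\ A != set0,
      forall v, v \in A -> good v,
      forall u v, u \in A -> v \in A ->
        connect (fun x y => [&& badj x y, x \in A & y \in A]) u v
    & forall u v, u \in A -> badj u v -> good v -> v \in A].

End Lattice.

(* Main.v *)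
Require Import Defs.
From HB Require Import structures.
From mathcomp Require Import all_boot all_algebra.
From mathcomp Require Import zify.
From Stdlib Require Import ClassicalEpsilon Classical.
Import GRing.Theory.

Section LA.
Variables D L : nat.
Local Notation site := (site D L).
Local Notation pauli := (pauli D L).
Local Notation pid := (pid D L).
Implicit Types (s P R Q X : pauli).

Definition pb (P : Prop) : bool := if excluded_middle_informative P then true else false.
Lemma pbP (P : Prop) : reflect P (pb P).
Proof. rewrite /pb; case: excluded_middle_informative => h; by constructor. Qed.

Lemma pmulC (P R : pauli) : pmul P R = pmul R P.
Proof. apply/ffunP => q; rewrite !ffunE; congr pair; exact: addbC. Qed.
Lemma pmulA (P R Q : pauli) : pmul P (pmul R Q) = pmul (pmul P R) Q.
Proof. apply/ffunP => q; rewrite !ffunE /=; congr pair; exact: addbA. Qed.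
Lemma pmul1 (P : pauli) : pmul P pid = P.
Proof. apply/ffunP => q; rewrite !ffunE /= !addbF; by case: (P q). Qed.
Lemma pmulK (P R : pauli) : pmul (pmul P R) R = P.
Proof. apply/ffunP => q; rewrite !ffunE /= -!addbA !addbb !addbF; by case: (P q). Qed.

Lemma sympl_mulr s (P R : pauli) : sympl s (pmul P R) = sympl s P (+) sympl s R.
Proof.
rewrite /sympl -big_split /=; apply: eq_bigr => q _; rewrite !ffunE /=.
by case: (s q) => [[] []]; case: (P q) => [[] []]; case: (R q) => [[] []].
Qed.
Lemma sympl_id s : sympl s pid = false.
Proof. by rewrite /sympl big1 // => q _; rewrite ffunE /= !andbF. Qed.
Lemma sympl_X s r : sympl s (Xop r) = (s r).2.
Proof.
rewrite /sympl (bigD1 r) //= big1 ?addbF => [|q /negbTE qr]; rewrite !ffunE /= ?eqxx ?qr.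
  by rewrite andbF andbT.
by rewrite !andbF.
Qed.
Lemma sympl_Z s r : sympl s (Zop r) = (s r).1.
Proof.
rewrite /sympl (bigD1 r) //= big1 ?addbF => [|q /negbTE qr]; rewrite !ffunE /= ?eqxx ?qr.
  by rewrite andbF andbT addbF.
by rewrite !andbF.
Qed.
Lemma gen_comm S s : (forall P, S P -> pcommute s P) -> in_centralizer (gen S) s.
Proof.
move=> h P; elim => [|R /h //|R Q _ h1 _ h2].
  by rewrite /pcommute sympl_id.
by move: h1 h2; rewrite /pcommute sympl_mulr; case: sympl; case: sympl.
Qed.
Lemma gen_mul' S P R : gen S P -> gen S R -> gen S (pmul P R).
Proof. exact: gen_mul. Qed.

Local Open Scope ring_scope.
Definition bF (b : bool) : 'F_2 := (b : nat)%:R.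
Lemma bF_add a c : bF (a (+) c) = bF a + bF c.
Proof. by case: a; case: c; rewrite /bF /= ?addr0 ?add0r //; apply: val_inj. Qed.
Lemma bF_and a c : bF (a && c) = bF a * bF c.
Proof. by case: a; case: c; rewrite /bF /= ?mulr0 ?mul0r ?mulr1. Qed.
Lemma F2_cases (x : 'F_2) : x = 0 \/ x = 1.
Proof. case: x => [[|[|]]] //= H. left; exact/val_inj. right; exact/val_inj. Qed.
Lemma bF_eq1 (x : 'F_2) : bF (x == 1) = x.
Proof. by case: (F2_cases x) => ->; rewrite /bF //= eqxx. Qed.
Lemma bF_inj : injective bF.
Proof. by case; case => // /(congr1 val). Qed.

Definition N := #|{: site * bool}|.
Definition coordP (P : pauli) (x : site * bool) : bool :=
  if x.2 then (P x.1).2 else (P x.1).1.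
Definition vec (P : pauli) : 'rV['F_2]_N := \row_(j < N) bF (coordP P (enum_val j)).
Definition sOf (c : 'cV['F_2]_N) : pauli :=
  [ffun q => (c (enum_rank (q, true)) 0 == 1, c (enum_rank (q, false)) 0 == 1)].

Lemma pairing (c : 'cV['F_2]_N) P : (vec P *m c) 0 0 = bF (sympl (sOf c) P).
Proof.
rewrite !mxE.
transitivity (\sum_(j < N) (fun x => bF (coordP P x) * bF (c (enum_rank x) 0 == 1)) (enum_val j)).
  by apply: eq_bigr => j _; rewrite mxE enum_valK bF_eq1.
pose g := fun x : site * bool => bF (coordP P x) * bF (c (enum_rank x) 0 == 1).
transitivity (\sum_(x in predT) g x); first by rewrite (big_enum_val (A:=predT) g).
transitivity (\sum_(q : site) \sum_(b : bool) g (q, b)).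
  by rewrite pair_big /=; apply: eq_big => // -[q b].
rewrite /sympl (big_morph bF bF_add (erefl (bF false))).
apply: eq_bigr => q _; rewrite big_bool /= bF_add !bF_and !ffunE /= addrC.
by rewrite /g /coordP /= addrC mulrC [X in _ + X = _]mulrC.
Qed.

Lemma vec1 : vec pid = 0.
Proof. by apply/rowP => j; rewrite !mxE /coordP ffunE; case: (enum_val j) => q []. Qed.
Lemma vecM P R : vec (pmul P R) = vec P + vec R.
Proof. by apply/rowP => j; rewrite !mxE /coordP ffunE; case: (enum_val j) => q [] /=; rewrite bF_add. Qed.
Lemma vec_inj : injective vec.
Proof.
move=> P R /rowP e; apply/ffunP => q.
have := e (enum_rank (q, true)); have := e (enum_rank (q, false)).
rewrite !mxE !enum_rankK /coordP /= => /bF_inj e1 /bF_inj e2.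
by move: e1 e2; case: (P q) => ? ?; case: (R q) => ? ? /= -> ->.
Qed.

Lemma mul_col_entry m n p (A : 'M['F_2]_(m, n)) (B : 'M['F_2]_(n, p)) i j :
  (A *m col j B) i 0 = (A *m B) i j.
Proof. by rewrite !mxE; apply: eq_bigr => k _; rewrite !mxE. Qed.

Lemma perp (S : pauli -> Prop) X : ~ gen S X ->
  exists s, (forall P, S P -> pcommute s P) /\ sympl s X.
Proof.
move=> nX.
pose G := [set P | pb (gen S P)].
pose M : 'M['F_2]_(#|{: pauli}|, N) :=
  \matrix_(i < #|{: pauli}|) (if enum_val i \in G then vec (enum_val i) else 0).
have nle : ~~ (vec X <= M)%MS.
  apply/negP => /submxP [Dm eD]; apply: nX.
  have : exists2 P, gen S P & vec X = vec P.
    rewrite eD mulmx_sum_row.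
    apply: (big_ind (fun v => exists2 P, gen S P & v = vec P)).
    - by exists pid; [constructor | rewrite vec1].
    - move=> _ _ [P1 g1 ->] [P2 g2 ->]; exists (pmul P1 P2); first exact: gen_mul.
      by rewrite vecM.
    - move=> i _; rewrite rowK; case: (F2_cases (Dm 0 i)) => ->.
        by rewrite scale0r; exists pid; [constructor | rewrite vec1].
      rewrite scale1r; case: ifP => [|_].
        by rewrite inE => /pbP g; exists (enum_val i).
      by exists pid; [constructor | rewrite vec1].
  by case=> P g /vec_inj ->.
have [j hj] : exists j, (vec X *m cokermx M) 0 j != 0.
  apply/existsP; move: nle; rewrite submxE; apply: contraR.
  rewrite negb_exists => /forallP h; apply/eqP/rowP => j.
  by move: (h j); rewrite negbK => /eqP ->; rewrite mxE.
pose c := col j (cokermx M).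
exists (sOf c); split.
  move=> P SP; rewrite /pcommute; apply/negP => sy.
  have : (vec P *m c) 0 0 = 0.
    have -> : vec P = row (enum_rank P) M.
      rewrite rowK enum_rankK inE; case: pbP => // [] n; exfalso; apply: n; by constructor.
    by rewrite mul_col_entry -row_mul mulmx_coker !mxE.
  by rewrite pairing sy.
apply/negPn/negP => sy; move: hj.
have : (vec X *m c) 0 0 = (vec X *m cokermx M) 0 j.
  by rewrite mul_col_entry.
by rewrite pairing (negbTE sy) => <-.
Qed.
End LA.

Section Geo.
Variables D L : nat.
Local Notation site := (site D L).
Local Notation pauli := (pauli D L).
Implicit Types (s P R Q X : pauli) (q r i : site).
Local Notation zz := (false, false).

Definition close k i q : bool := [forall j, (q j <= i j + k) && (i j <= q j + k)].

Lemma gmap0 (f : pauli2 -> pauli2) : clifford2 f -> f (zz, zz) = (zz, zz).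
Proof.
case=> hadd _ _; have := hadd (zz, zz) (zz, zz); rewrite /add2 /add1 /=.
by case: (f _) => [[a b] [c e]] /= [-> -> -> ->]; rewrite !addbb.
Qed.

Lemma nn_sym q r : nn q r = nn r q.
Proof.
rewrite /nn; apply/existsP/existsP => -[j /andP [h1 /forallP h2]]; exists j;
  (apply/andP; split; [by rewrite orbC | apply/forallP => k; move: (h2 k); by case: (k != j) => //=; rewrite eq_sym]).
Qed.

Lemma nn_close q r : nn q r -> forall j, (q j <= r j + 1) && (r j <= q j + 1).
Proof.
move=> /existsP [j0 /andP [h /forallP hk]] j.
case: (eqVneq j j0) => [->|ne].
  by case/orP: h => /eqP <-; apply/andP; split; lia.
by move: (hk j); rewrite ne /= => /eqP ->; apply/andP; split; lia.
Qed.

Lemma layer_props (l : seq (gate D L)) P : valid_layer l ->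
  (forall q, all (fun g => q \notin gate_support g) l -> layer_act l P q = P q) /\
  (forall q, layer_act l P q != zz -> exists r, P r != zz /\ (r = q \/ nn q r)).
Proof.
elim: l => [|g l IH] /=.
  by move=> _; split => // q h; exists q; split => //; left.
case=> [[[vn vc] va]]; rewrite /= => /andP [dis pw].
have [IHa IHb] := IH (conj va pw).
set P' := layer_act l P.
have hg1 : P' (gq1 g) = P (gq1 g).
  apply: IHa; apply: sub_all dis => h /disjointFr; rewrite /gate_support => ->//.
  by rewrite !inE eqxx.
have hg2 : P' (gq2 g) = P (gq2 g).
  apply: IHa; apply: sub_all dis => h /disjointFr; rewrite /gate_support => ->//.
  by rewrite !inE eqxx orbT.
split.
  move=> q /andP [nq hq]; rewrite /gate_act ffunE.
  move: nq; rewrite /gate_support !inE negb_or => /andP [/negbTE -> /negbTE ->].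
  exact: IHa.
move=> q; rewrite /gate_act ffunE hg1 hg2.
have key : (P (gq1 g), P (gq2 g)) != (zz, zz) ->
    exists r, P r != zz /\ (r = gq1 g \/ r = gq2 g).
  case: (eqVneq (P (gq1 g)) zz) => e1.
    case: (eqVneq (P (gq2 g)) zz) => e2; first by rewrite e1 e2 eqxx.
    by move=> _; exists (gq2 g); split => //; right.
  by move=> _; exists (gq1 g); split => //; left.
case: (eqVneq q (gq1 g)) => [->|n1].
  move=> h; case: key.
    by apply: contra h => /eqP ->; rewrite (gmap0 _ vc).
  by move=> r [hr [e|e]]; exists r; subst r; split => //; [left|right].
case: (eqVneq q (gq2 g)) => [->|n2].
  move=> h; case: key.
    by apply: contra h => /eqP ->; rewrite (gmap0 _ vc).
  by move=> r [hr [e|e]]; exists r; subst r; split => //; [right; rewrite nn_sym|left].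
exact: IHb.
Qed.

Lemma layer_close (l : seq (gate D L)) P i k : valid_layer l ->
  (forall q, P q != zz -> close k i q) ->
  forall q, layer_act l P q != zz -> close k.+1 i q.
Proof.
move=> vl hP q /(proj2 (layer_props _ P vl)) [r [/hP /forallP hr [<-|/nn_close hn]]].
  by apply/forallP => j; move: (hr j); lia.
by apply/forallP => j; move: (hr j) (hn j); lia.
Qed.

Lemma heis_close d U t P i k : valid_circuit d U -> t <= d ->
  (forall q, P q != zz -> close k i q) ->
  forall q, heis U t P q != zz -> close (k + t) i q.
Proof.
move=> vc; elim: t P k => [|t IH] P k ht hP /=; first by rewrite addn0.
rewrite -addSnnS; apply: IH; first by lia.
apply: layer_close => //; apply: vc; lia.
Qed.

Lemma X_close i q : Xop i q != zz -> close 0 i q.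
Proof.
rewrite ffunE; case: (eqVneq q i) => [->|] //= _.
by apply/forallP => j; rewrite !addn0 leqnn.
Qed.
Lemma Z_close i q : Zop i q != zz -> close 0 i q.
Proof.
rewrite ffunE; case: (eqVneq q i) => [->|] //= _.
by apply/forallP => j; rewrite !addn0 leqnn.
Qed.

End Geo.

Local Notation zz := (false, false).

Lemma card_sum (T : finType) (X : {set T}) (p : pred T) :
  #|[set x in X | p x]| = \sum_(x in X) (p x : nat).
Proof.
rewrite -sum1_card big_mkcond [RHS]big_mkcond /=.
by apply: eq_bigr => x _; rewrite !inE; case: (x \in X); case: (p x).
Qed.

Lemma sympl_mull D L (s1 s2 P : pauli D L) :
  sympl (pmul s1 s2) P = sympl s1 P (+) sympl s2 P.
Proof.
rewrite /sympl -big_split /=; apply: eq_bigr => q _; rewrite !ffunE /=.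
by case: (s1 q) => [[] []]; case: (P q) => [[] []]; case: (s2 q) => [[] []].
Qed.
Lemma sympl_idl D L (P : pauli D L) : sympl (pid D L) P = false.
Proof. by rewrite /sympl big1 // => q _; rewrite ffunE. Qed.

Lemma fix_lemma D L (S : pauli D L -> Prop) (P : pauli D L) : forall h, gen S h ->
  (forall q, h q != P q -> gen S (Xop q) /\ gen S (Zop q)) -> gen S P.
Proof.
move=> h; move Hn : #|[set q | h q != P q]| => n.
elim: n h Hn => [|n IH] h Hn gh hd.
  have -> // : P = h.
  apply/ffunP => q; apply/eqP; rewrite eq_sym; apply/negPn/negP => nq.
  by move/eqP: Hn; rewrite cards_eq0 => /eqP /setP /(_ q); rewrite !inE nq.
have [q0 q0in] : exists q0, q0 \in [set q | h q != P q].
  by apply/set0Pn; rewrite -card_gt0 Hn.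
pose c := pmul (if (h q0).1 != (P q0).1 then Xop q0 else pid D L)
               (if (h q0).2 != (P q0).2 then Zop q0 else pid D L).
have [gX gZ] : gen S (Xop q0) /\ gen S (Zop q0) by apply: hd; move: q0in; rewrite inE.
have gc : gen S c.
  by apply: gen_mul; [case: ifP => _ | case: ifP => _]; rewrite ?gX ?gZ //; constructor.
have hc : forall q, pmul h c q = if q == q0 then P q0 else h q.
  move=> q; rewrite /c ffunE [pmul _ _ q]ffunE.
  case: ifP => e1; case: ifP => e2; rewrite !ffunE /=; case: eqP => [->|ne] //=;
   rewrite ?addbF //; move: e1 e2; case: (h q0) => [[] []]; case: (P q0) => [[] []];
   by case: (h q).
apply: (IH (pmul h c)) => //.
- have -> : [set q | pmul h c q != P q] = [set q | h q != P q] :\ q0.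
    apply/setP => q; rewrite !inE hc; case: (eqVneq q q0) => [->|ne]; by rewrite ?eqxx.
  by move: Hn; rewrite (cardsD1 q0) q0in => -[].
- exact: gen_mul.
- by move=> q; rewrite hc; case: (eqVneq q q0) => [->|_]; [rewrite eqxx | exact: hd].
Qed.

Section Main.
Variables (D K d : nat).
Local Notation L := (K * (2 * d)).
Local Notation sz := (2 * d).
Local Notation site := (site D L).
Local Notation pauli := (pauli D L).
Variable U : nat -> seq (gate D L).
Variable b : {set site * 'I_d.+1}.
Variable A : {set block D K}.
Hypothesis vc : valid_circuit d U.
Hypothesis comp : @is_component D K (@good_block D _ K d U b sz) A.
Implicit Types (s P R Q X : pauli) (q r i : site).

Local Notation H := (gen (Mb U b)).
Definition inR q : bool := [exists u in A, inblock sz u q].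
Definition S' P : Prop := Mb U b P \/ exists r, ~~ inR r /\ (P = Xop r \/ P = Zop r).
Definition near q : Prop :=
  exists w, inblock sz w q /\ exists2 u, u \in A & (w = u \/ badj u w).

Lemma geo (u : block D K) q r : inblock sz u q ->
  (forall j, (q j <= r j + sz) && (r j <= q j + sz)) ->
  exists w, inblock sz w r /\ (w = u \/ badj u w).
Proof.
move=> hu h; case: (posnP d) => [d0|dpos].
  have qr : q = r.
    apply/ffunP => j; apply: val_inj; move: (h j) => /=; move: d0; lia.
  by subst; exists u; split => //; left.
have szpos : 0 < sz by lia.
have wlt : forall j, r j %/ sz < K.
  by move=> j; rewrite ltn_divLR //; exact: ltn_ord.
pose w : block D K := [ffun j => Ordinal (wlt j)].
have hw : inblock sz w r by apply/forallP => j; rewrite ffunE.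
exists w; split => //.
case: (eqVneq u w) => [->|ne]; [by left | right].
rewrite /badj ne /=; apply/forallP => j; rewrite ffunE /=.
move/forallP: hu => /(_ j) /eqP <-.
have := h j => /andP [h1 h2].
have e1 : q j %/ sz <= r j %/ sz + 1.
  by rewrite -(divnDMl 1 (r j) szpos) mul1n; exact: leq_div2r.
have e2 : r j %/ sz <= q j %/ sz + 1.
  by rewrite -(divnDMl 1 (q j) szpos) mul1n; exact: leq_div2r.
by apply/andP; split; lia.
Qed.

Lemma inv P : gen S' P ->
  exists h, H h /\ (forall q, inR q -> h q = P q) /\ (forall q, h q != zz -> near q).
Proof.
elim => [|{}P [hM | [r [nr hr]]] | P1 P2 _ [h1 [g1 [a1 n1]]] _ [h2 [g2 [a2 n2]]]].
- by exists (pid D L); split; [constructor | split => // q; rewrite ffunE].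
- case: (boolP [exists q, inR q && (P q != zz)]) => [/existsP [q0 /andP [r0 p0]] | nex].
    exists P; split; first by constructor.
    split => // r pr.
    case: hM => i [t [_ hP]].
    have hc : forall q, P q != zz -> close D L t i q.
      move=> q; case: hP => ->; apply: (@heis_close D L d U t _ i 0 vc) => //;
        first [exact: (ltn_ord t) | exact: X_close | exact: Z_close].
    case/existsP: r0 => u /andP [uA uq].
    have [w [wr ww]] : exists w, inblock sz w r /\ (w = u \/ badj u w).
      apply: (geo _ _ _ uq) => j.
      move/forallP: (hc _ p0) => /(_ j); move/forallP: (hc _ pr) => /(_ j).
      have := ltn_ord t; lia.
    by exists w; split => //; exists u.
  exists (pid D L); split; first by constructor.
  split => [q rq|q]; rewrite ffunE //.
  move: nex; rewrite negb_exists => /forallP /(_ q); rewrite rq /= negbK => /eqP ->.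
  by [].
- exists (pid D L); split; first by constructor.
  split => [q rq|q]; rewrite ffunE //.
  have nqr : q != r by apply: contraNneq nr => <-.
  by case: hr => ->; rewrite ffunE (negbTE nqr).
- exists (pmul h1 h2); split; first exact: gen_mul.
  split => [q rq|q]; first by rewrite !ffunE a1 // a2.
  rewrite ffunE; case: (eqVneq (h1 q) zz) => [e1|/n1 //].
  case: (eqVneq (h2 q) zz) => [e2|/n2 //].
  by rewrite e1 e2.
Qed.

Lemma key P : (forall q, P q != zz -> inR q) -> gen S' P -> H P.
Proof.
move=> hs /inv [h [gh [ag nh]]].
apply: (@fix_lemma D L (Mb U b) P h gh) => q hq.
have nR : ~~ inR q by apply: contra hq => /ag ->.
have Pq : P q = zz by apply/eqP; apply: contraR nR => /hs.
have [w [wq [u uA [ewu | bw]]]] : near q by apply: nh; rewrite -Pq.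
  by move: nR; subst; case/existsP; exists u; rewrite uA wq.
have wA : w \notin A by apply: contra nR => wA; apply/existsP; exists w; rewrite wA wq.
have ng : ~ @good_block D _ K d U b sz w.
  by move=> gw; case: comp => _ _ _ /(_ u w uA bw gw); apply/negP.
by apply: NNPP => nd; apply: ng; exists q.
Qed.

Definition W s : Prop := in_centralizer H s /\ forall q, s q != zz -> inR q.

Lemma supp1 (x : pauli) q : (x = Xop q \/ x = Zop q) -> forall r, x r != zz -> r = q.
Proof. by case=> -> r; rewrite ffunE; case: (eqVneq r q). Qed.

Lemma exists_sv v : v \in A -> exists s, W s /\ exists q, inblock sz v q && (s q != zz).
Proof.
move=> vA; case: comp => _ hg _ _.
have [q [vq nd]] := hg v vA.
have Rq : inR q by apply/existsP; exists v; rewrite vA vq.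
have : exists X, (X = Xop q \/ X = Zop q) /\ ~ gen S' X.
  case: (classic (gen S' (Xop q))) => hx; last by exists (Xop q); split => //; left.
  case: (classic (gen S' (Zop q))) => hz; last by exists (Zop q); split => //; right.
  exfalso; apply: nd; split; apply: key => // r hr.
    by rewrite (@supp1 (Xop q) q (or_introl erefl) r hr).
  by rewrite (@supp1 (Zop q) q (or_intror erefl) r hr).
case=> X [eX nX].
have [s [hs sX]] := @perp D L S' X nX.
exists s; split; first split.
- by apply: gen_comm => P hP; apply: hs; left.
- move=> r sr; apply: contraT => nr; exfalso.
  have h1 := hs (Xop r) (or_intror (ex_intro _ r (conj nr (or_introl erefl)))).
  have h2 := hs (Zop r) (or_intror (ex_intro _ r (conj nr (or_intror erefl)))).
  move: h1 h2 sr; rewrite /pcommute sympl_X sympl_Z.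
  by case: (s r) => [[] []].
- exists q; rewrite vq /=; move: sX.
  by case: eX => ->; rewrite ?sympl_X ?sympl_Z; case: (s q) => [[] []].
Qed.

Lemma main_sec : exists s : pauli,
    [/\ in_centralizer (gen (Mb U b)) s,
        forall q, q \in supp s -> exists2 v, v \in A & inblock (2 * d) v q
      & #|A| <= 2 * #|[set v in A | [exists q, (q \in supp s) && inblock (2 * d) v q]]|].
Proof.
pose meet (s : pauli) (v : block D K) : bool := [exists q, (q \in supp s) && inblock sz v q].
pose Wset := [set s | pb (W s)].
have WP : forall s, s \in Wset -> W s by move=> s; rewrite inE => /pbP.
have PW : forall s, W s -> s \in Wset by move=> s ws; rewrite inE; apply/pbP.
have Wmul : forall s1 s2, W s1 -> W s2 -> W (pmul s1 s2).
  move=> s1 s2 [c1 h1] [c2 h2]; split.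
    move=> P hP; move: (c1 P hP) (c2 P hP); rewrite /pcommute sympl_mull.
    by case: sympl; case: sympl.
  move=> q; rewrite ffunE; case: (eqVneq (s1 q) zz) => [e1|/h1 //].
  case: (eqVneq (s2 q) zz) => [e2|/h2 //].
  by rewrite e1 e2.
have step1 : forall v, v \in A -> #|Wset| <= 2 * #|[set s in Wset | meet s v]|.
  move=> v vA; have [sv [Wsv [q0 /andP [vq0 sq0]]]] := exists_sv v vA.
  have e : #|Wset| = #|[set s in Wset | meet s v]| + #|[set s in Wset | ~~ meet s v]|.
    rewrite -(cardsID [set s | meet s v] Wset); congr (_ + _); apply: eq_card => s;
      by rewrite !inE andbC.
  suff : #|[set s in Wset | ~~ meet s v]| <= #|[set s in Wset | meet s v]| by lia.
  have inj : injective (fun s => pmul s sv).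
    by move=> x y exy; rewrite -(pmulK _ _ x sv) exy pmulK.
  rewrite -(card_imset _ inj); apply: subset_leq_card; apply/subsetP => _ /imsetP [s hs ->].
  move: hs; rewrite !inE => /andP [ws nm]; apply/andP; split.
    by apply/pbP; apply: Wmul => //; exact/pbP.
  apply/existsP; exists q0; rewrite vq0 andbT !inE ffunE.
  have : s q0 = zz.
    apply/eqP; apply: contraR nm => sq; apply/existsP; exists q0; by rewrite inE sq vq0.
  by move=> ->; move: sq0; case: (sv q0) => [[] []].
have W1 : pid D L \in Wset.
  apply: PW; split; first by move=> P _; rewrite /pcommute sympl_idl.
  by move=> q; rewrite ffunE.
case: (boolP [exists s in Wset, #|A| <= 2 * #|[set v in A | meet s v]|]).
  case/existsP => s /andP [sW hs]; exists s; split => //; first by case: (WP _ sW).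
  move=> q; rewrite inE => /(proj2 (WP _ sW)) /existsP [v /andP [vA vq]].
  by exists v.
rewrite negb_exists => /forallP hn; exfalso.
have h1 : \sum_(s in Wset) (2 * #|[set v in A | meet s v]|).+1 <= \sum_(s in Wset) #|A|.
  apply: leq_sum => s sW; move: (hn s); rewrite sW /=; lia.
have h2 : \sum_(s in Wset) (2 * #|[set v in A | meet s v]|).+1 =
          2 * \sum_(v in A) #|[set s in Wset | meet s v]| + #|Wset|.
  rewrite (eq_bigr (fun s => 2 * #|[set v in A | meet s v]| + 1)) => [|s _]; last by rewrite addn1.
  rewrite big_split /= sum1_card -big_distrr /=; congr (2 * _ + _).
  under eq_bigr do rewrite card_sum.
  rewrite exchange_big /=; apply: eq_bigr => v _; by rewrite card_sum.
have h3 : \sum_(v in A) #|Wset| <= \sum_(v in A) 2 * #|[set s in Wset | meet s v]|.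
  exact: leq_sum.
move: h1 h3; rewrite h2 -big_distrr /= !sum_nat_const.
have : 0 < #|Wset| by apply/card_gt0P; exists (pid D L).
set S0 := \sum_(v in A) _. set W0 := #|Wset|. set A0 := #|A|. rewrite [W0 * A0]mulnC. move=> h0 h1 h3. lia.
Qed.

End Main.

Theorem lemma3 (D K d : nat)
  (U : nat -> seq (gate D (K * (2 * d))))
  (b : {set site D (K * (2 * d)) * 'I_d.+1})
  (A : {set block D K}) :
  valid_circuit d U ->
  @is_component D K (@good_block D _ K d U b (2 * d)) A ->
  (forall A', @is_component D K (@good_block D _ K d U b (2 * d)) A' -> #|A'| <= #|A|) ->
  exists s : pauli D (K * (2 * d)),
    [/\ in_centralizer (gen (Mb U b)) s,
        forall q, q \in supp s -> exists2 v, v \in A & inblock (2 * d) v q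
      & #|A| <= 2 * #|[set v in A | [exists q, (q \in supp s) && inblock (2 * d) v q]]|].
Proof. by move=> vc comp _; exact: main_sec comp. Qed.
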